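(* Let $n\ge 1$, and let $E_1,\dots,E_n\in\mathbb{R}$ be the energy scores of a minibatch $B=\{x_i\}_{i=1}^n$. Define \[ \mu_B=\frac{1}{n}\sum_{j=1}^{n}E_j,\qquad s_B=\sqrt{\frac{1}{n}\sum_{j=1}^{n}(E_j-\mu_B)^2}, \] and, for constants $\epsilon_B>0$ and $\beta>0$, \[ \widetilde{E}_i=\frac{E_i-\mu_B}{s_B+\epsilon_B},\qquad w_i=\rho(-\beta\widetilde{E}_i),\qquad \rho(t)=\frac{1}{1+\exp(-t)}. \] If $n=1$, then $w_1=1/2$. If $n\ge 2$, then for every $i\in\{1,\dots,n\}$, \[ \rho\!\left(-\beta\sqrt{n-1}\right)\le w_i\le \rho\!\left(\beta\sqrt{n-1}\right). \] In particular, $0<w_i<1$ for all $i$.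
   Context: The $E_i$ are arbitrary real numbers (in the application, $E_i=E(x_i)$ is a disagreement score between a private and a proxy model on sample $x_i$); $w_i$ is called the trust weight of sample $x_i$. *)

(* Defs.v *)
(* real numbers R. Scores are E : nat -> R, indices 0..n-1
   correspond to x_1..x_n. *)
From Stdlib Require Import Reals Lra.
Open Scope R_scope.

Fixpoint rsum (n : nat) (f : nat -> R) : R :=
  match n with
  | O => 0
  | S m => rsum m f + f m
  end.

Definition sigmoid (t : R) : R := 1 / (1 + exp (- t)).

Definition batch_mean (n : nat) (E : nat -> R) : R :=
  / INR n * rsum n E.

Definition batch_std (n : nat) (E : nat -> R) : R :=
  sqrt (/ INR n * rsum n (fun j => (E j - batch_mean n E) ^ 2)).

Definition normalized_score (n : nat) (E : nat -> R) (epsB : R) (i : nat) : R :=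
  (E i - batch_mean n E) / (batch_std n E + epsB).

Definition trust_weight (n : nat) (E : nat -> R) (epsB beta : R) (i : nat) : R :=
  sigmoid (- beta * normalized_score n E epsB i).

(* Main.v *)
Require Import Defs.
From Stdlib Require Import Reals Lra Lia Psatz.
Open Scope R_scope.

Lemma Rabs_le_inv x y : Rabs x <= y -> -y <= x <= y.
Proof. intros H. unfold Rabs in H. destruct (Rcase_abs x); lra. Qed.

Lemma rsum_ext n f g : (forall j, (j < n)%nat -> f j = g j) -> rsum n f = rsum n g.
Proof. induction n; simpl; intros H; auto. rewrite IHn by (intros; apply H; lia). rewrite H by lia. auto. Qed.

Lemma rsum_plus n f g : rsum n (fun j => f j + g j) = rsum n f + rsum n g.
Proof. induction n; simpl; [lra|]. rewrite IHn. lra. Qed.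

Lemma rsum_scal n c f : rsum n (fun j => c * f j) = c * rsum n f.
Proof. induction n; simpl; [lra|]. rewrite IHn. lra. Qed.

Lemma rsum_const n c : rsum n (fun _ => c) = INR n * c.
Proof. induction n; [simpl; lra|]. rewrite S_INR. simpl. rewrite IHn. lra. Qed.

Lemma rsum_nonneg n f : (forall j, 0 <= f j) -> 0 <= rsum n f.
Proof. induction n; simpl; intros; [lra|]. specialize (IHn H). specialize (H n). lra. Qed.

Lemma rsum_skip n g i : (i < n)%nat ->
  rsum n (fun j => if Nat.eqb j i then 0 else g j) = rsum n g - g i.
Proof.
  induction n; intros Hi; [lia|]. simpl.
  destruct (Nat.eqb n i) eqn:E.
  - apply Nat.eqb_eq in E. subst.
    assert (rsum i (fun j => if Nat.eqb j i then 0 else g j) = rsum i g).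
    { apply rsum_ext. intros j Hj. destruct (Nat.eqb j i) eqn:F; auto.
      apply Nat.eqb_eq in F; lia. }
    lra.
  - apply Nat.eqb_neq in E. rewrite IHn by lia. lra.
Qed.

Lemma sigmoid_bounds t : 0 < sigmoid t < 1.
Proof.
  unfold sigmoid. pose proof (exp_pos (-t)). split.
  - apply Rdiv_lt_0_compat; lra.
  - apply (Rmult_lt_reg_r (1 + exp (-t))); [lra|].
    field_simplify; lra.
Qed.

Lemma sigmoid_mono x y : x <= y -> sigmoid x <= sigmoid y.
Proof.
  intros H. unfold sigmoid. unfold Rdiv. rewrite !Rmult_1_l.
  apply Rinv_le_contravar. pose proof (exp_pos (-y)); lra.
  assert (exp (-y) <= exp (-x)).
  { destruct (Req_dec x y). subst; lra. left. apply exp_increasing. lra. }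
  lra.
Qed.

Lemma key_ineq n (d : nat -> R) i : (2 <= n)%nat -> (i < n)%nat ->
  rsum n d = 0 ->
  INR n * (d i) ^ 2 <= (INR n - 1) * rsum n (fun j => d j ^ 2).
Proof.
  intros Hn Hi Hs.
  assert (Hk : 1 <= INR n - 1).
  { assert (2 <= INR n) by (replace 2 with (INR 2) by (simpl; lra); apply le_INR; lia). lra. }
  set (k := INR n - 1) in *.
  set (a := d i / k).
  set (S := rsum n (fun j => d j ^ 2)).
  pose proof (rsum_nonneg n (fun j => if Nat.eqb j i then 0 else (d j + a) ^ 2)) as H0.
  assert (H1 : 0 <= rsum n (fun j => if Nat.eqb j i then 0 else (d j + a) ^ 2)).
  { apply H0. intros j. destruct (Nat.eqb j i). lra. apply pow2_ge_0. }
  rewrite rsum_skip in H1 by auto.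
  assert (H2 : rsum n (fun j => (d j + a) ^ 2) = S + 2 * a * rsum n d + INR n * a ^ 2).
  { rewrite (rsum_ext n _ (fun j => (d j ^ 2 + (2 * a) * d j) + a ^ 2)) by (intros; ring).
    rewrite rsum_plus, rsum_plus, rsum_scal, rsum_const. unfold S. ring. }
  rewrite H2, Hs in H1.
  assert (Hn' : INR n = k + 1) by (unfold k; ring).
  rewrite Hn' in H1 |- *.
  assert (Ha : d i = a * k) by (unfold a; field; lra).
  rewrite Ha in H1 |- *.
  assert (0 <= k * (S + 2 * a * 0 + (k + 1) * a ^ 2 - (a * k + a) ^ 2)) by (apply Rmult_le_pos; lra).
  nra.
Qed.

Theorem proposition2 (n : nat) (E : nat -> R) (epsB beta : R) :
  (1 <= n)%nat -> 0 < epsB -> 0 < beta ->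
  (n = 1%nat -> trust_weight n E epsB beta 0 = 1 / 2) /\
  ((2 <= n)%nat -> forall i : nat, (i < n)%nat ->
     sigmoid (- beta * sqrt (INR n - 1)) <= trust_weight n E epsB beta i /\
     trust_weight n E epsB beta i <= sigmoid (beta * sqrt (INR n - 1))) /\
  (forall i : nat, (i < n)%nat ->
     0 < trust_weight n E epsB beta i /\ trust_weight n E epsB beta i < 1).
Proof.
  intros Hn He Hb. split; [|split].
  - intros ->. unfold trust_weight, normalized_score, batch_mean. simpl.
    replace ((E 0%nat - / 1 * (0 + E 0%nat))) with 0 by field.
    unfold Rdiv, sigmoid. rewrite Rmult_0_l, Rmult_0_r. replace (- 0) with 0 by ring. rewrite exp_0. reflexivity.
  - intros H2 i Hi.
    set (m := batch_mean n E).
    set (d := fun j => E j - m).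
    assert (Hnpos : 0 < INR n) by (apply lt_0_INR; lia).
    assert (Hsd : rsum n d = 0).
    { unfold d. rewrite (rsum_ext n _ (fun j => E j + (-1) * (fun _ => m) j)) by (intros; simpl; ring).
      rewrite rsum_plus, rsum_scal, rsum_const. unfold m, batch_mean. field. lra. }
    pose proof (key_ineq n d i H2 Hi Hsd) as K.
    set (S := rsum n (fun j => d j ^ 2)) in K.
    assert (HS : 0 <= S) by (apply rsum_nonneg; intros; apply pow2_ge_0).
    assert (Hs : batch_std n E = sqrt (/ INR n * S)) by reflexivity.
    set (s := batch_std n E) in *.
    assert (Hs0 : 0 <= s) by (rewrite Hs; apply sqrt_pos).
    assert (Hk : 0 <= INR n - 1).
    { assert (2 <= INR n) by (replace 2 with (INR 2) by (simpl; lra); apply le_INR; lia). lra. }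
    assert (Habs : Rabs (d i) <= sqrt (INR n - 1) * s).
    { assert (Hinv : 0 < / INR n) by (apply Rinv_0_lt_compat; lra).
      rewrite Hs, <- sqrt_mult; [| lra | apply Rmult_le_pos; lra].
      rewrite <- sqrt_Rsqr_abs. apply sqrt_le_1_alt. unfold Rsqr.
      apply (Rmult_le_reg_l (INR n)); [lra|].
      replace (INR n * ((INR n - 1) * (/ INR n * S))) with ((INR n - 1) * S) by (field; lra).
      lra. }
    assert (Hz : Rabs (normalized_score n E epsB i) <= sqrt (INR n - 1)).
    { unfold normalized_score. fold m. change (E i - m) with (d i). fold s.
      unfold Rdiv; rewrite Rabs_mult, Rabs_inv. rewrite (Rabs_right (s + epsB)) by lra. fold (Rdiv (Rabs (d i)) (s + epsB)).
      apply (Rmult_le_reg_r (s + epsB)); [lra|].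
      unfold Rdiv. rewrite Rmult_assoc, Rinv_l, Rmult_1_r by lra.
      pose proof (sqrt_pos (INR n - 1)). nra. }
    destruct (Rabs_le_inv _ _ Hz) as [Hz1 Hz2].
    unfold trust_weight. split; apply sigmoid_mono; nra.
  - intros. apply sigmoid_bounds.
Qed.
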